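(* Equip $\mathbb R^{n\times n}$ with the Frobenius metric $g(X,Y)=\langle X,Y\rangle_F$, and equip $\mathbb R^\ell$ with the metric $g^A$ induced by the map $A:\mathbb R^\ell\to\mathbb R^{n\times n}$, $A(x)=A_0+\sum_{i=1}^\ell x_iA_i$. Then $g^A_x(u,v)=u^TBv$ for all $x,u,v\in\mathbb R^\ell$, and the Riemannian gradient of $F$ with respect to $g^A$ is $\nabla_{g^A}F(x)=B^{-1}\nabla F(x)$. Consequently the Riemannian gradient descent iteration $x^{k+1}=x^k-\nabla_{g^A}F(x^k)$ on $(\mathbb R^\ell,g^A)$ coincides with the Lift and Projection iteration: given $x^k$ and $\rho$, with $Z^k=(Q_1\;Q_2)\operatorname{diag}(\Lambda^*,\Lambda_2)(Q_1\;Q_2)^T$ and $x^{k+1}$ the minimiser of $\|Z^k-A(x)\|_F$ over $x\in\mathbb R^\ell$, one has $x^{k+1}=x^k-\nabla_{g^A}F(x^k)$.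
   Context: $A_0,\dots,A_\ell\in\mathbb R^{n\times n}$ are linearly independent real symmetric matrices; $\lambda_1(x)\le\dots\le\lambda_n(x)$ are the eigenvalues of $A(x)$. Given real numbers $\lambda_1^*\le\dots\le\lambda_m^*$ ($m\le n$) and $\rho\in S_n$: $r_i(x)=\lambda_{\rho_i}(x)-\lambda_i^*$, $F(x)=\frac12\sum_{i=1}^m r_i(x)^2$, $\nabla F(x)$ its Euclidean gradient, $\nabla F(x)=J_r(x)^Tr(x)$ with $(J_r)_{ij}=q_i^TA_jq_i$ where $q_i$ is the unit eigenvector for $\lambda_{\rho_i}(x)$. $B\in\mathbb R^{\ell\times\ell}$, $B_{ij}=\langle A_i,A_j\rangle_F=\operatorname{Tr}(A_i^TA_j)$. $A(x^k)=(Q_1\;Q_2)\operatorname{diag}(\Lambda_1,\Lambda_2)(Q_1\;Q_2)^T$ is a spectral decomposition with $(Q_1\;Q_2)$ orthogonal, $\Lambda_1=\operatorname{diag}(\lambda_{\rho_1}(x^k),\dots,\lambda_{\rho_m}(x^k))$, $\Lambda_2=\operatorname{diag}(\lambda_{\rho_{m+1}}(x^k),\dots,\lambda_{\rho_n}(x^k))$, $\Lambda^*=\operatorname{diag}(\lambda_1^*,\dots,\lambda_m^* )$. The induced metric is $g^A_x(u,v)=g(DA(x)[u],DA(x)[v])$, and the Riemannian gradient $\nabla_{g^A}F$ is defined by $DF(x)[v]=g^A_x(v,\nabla_{g^A}F(x))$ for all $v$. *)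

(* Defs.v *)
From HB Require Import structures.
From mathcomp Require Import all_boot all_order all_algebra fingroup perm.
From mathcomp Require Import all_classical all_reals all_analysis.
Set Implicit Arguments. Unset Strict Implicit. Unset Printing Implicit Defensive.
Import Order.TTheory GRing.Theory Num.Theory.
Import numFieldNormedType.Exports.
Local Open Scope ring_scope.
Local Open Scope classical_set_scope.

Section Defs.
Variable R : realType.

Definition frob {n : nat} (X Y : 'M[R]_n) : R := \tr (X^T *m Y).
Definition frob_norm {n : nat} (X : 'M[R]_n) : R := Num.sqrt (frob X X).

Definition sorted_eigs {n : nat} (M : 'M[R]_n) (s : seq R) : Prop :=
  sorted <=%R s /\ char_poly M = \prod_(a <- s) ('X - a%:P).

(* lambda_i(M): the i-th smallest eigenvalue (0-based), i : 'I_n. *)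
Definition eigval {n : nat} (M : 'M[R]_n) (i : 'I_n) : R :=
  nth 0 (xget [::] (sorted_eigs M)) i.

Definition Amap {n l : nat} (A0 : 'M[R]_n) (As : 'I_l -> 'M[R]_n)
  (x : 'cV[R]_l) : 'M[R]_n := A0 + \sum_(i < l) x i ord0 *: As i.

Definition Bmat {n l : nat} (As : 'I_l -> 'M[R]_n) : 'M[R]_l :=
  \matrix_(i, j) frob (As i) (As j).

Definition gA {n l : nat} (A0 : 'M[R]_n) (As : 'I_l -> 'M[R]_n)
  (x u v : 'cV[R]_l) : R :=
  frob ('d (Amap A0 As) x u) ('d (Amap A0 As) x v).

Definition Fobj {m p l : nat} (A0 : 'M[R]_(m + p)) (As : 'I_l -> 'M[R]_(m + p))
  (rho : 'S_(m + p)) (lstar : 'I_m -> R) (x : 'cV[R]_l) : R :=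
  2^-1 * \sum_(i < m) (eigval (Amap A0 As x) (rho (lshift p i)) - lstar i) ^+ 2.

Definition resid {m p l : nat} (A0 : 'M[R]_(m + p)) (As : 'I_l -> 'M[R]_(m + p))
  (rho : 'S_(m + p)) (lstar : 'I_m -> R) (x : 'cV[R]_l) : 'cV[R]_m :=
  \col_i (eigval (Amap A0 As x) (rho (lshift p i)) - lstar i).

Definition Jr {m p l : nat} (As : 'I_l -> 'M[R]_(m + p)) (Q1 : 'M[R]_(m + p, m))
  : 'M[R]_(m, l) :=
  \matrix_(i, j) ((col i Q1)^T *m As j *m col i Q1) ord0 ord0.

Definition gradF {m p l : nat} (A0 : 'M[R]_(m + p)) (As : 'I_l -> 'M[R]_(m + p))
  (rho : 'S_(m + p)) (lstar : 'I_m -> R) (Q1 : 'M[R]_(m + p, m)) (x : 'cV[R]_l)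
  : 'cV[R]_l := (Jr As Q1)^T *m resid A0 As rho lstar x.

End Defs.

(* Main.v *)
Require Import Defs.
From HB Require Import structures.
From mathcomp Require Import all_boot all_order all_algebra fingroup perm.
From mathcomp Require Import all_classical all_reals all_analysis.
Import Order.TTheory GRing.Theory Num.Theory.
Import numFieldNormedType.Exports.
Local Open Scope ring_scope.

Section S.
Context {R : realType} {n l : nat} {A0 : 'M[R]_n} {As : 'I_l -> 'M[R]_n}.

Definition Lf (x : 'cV[R]_l) : 'M[R]_n := \sum_(i < l) x i ord0 *: As i.

Lemma Lf_linear : linear Lf.
Proof.
move=> a u v; rewrite /Lf scaler_sumr -big_split /=; apply: eq_bigr => i _.
by rewrite !mxE scalerDl scalerA.
Qed.

Lemma Lf_cont : continuous Lf.
Proof.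
have -> : Lf = \sum_(i < l) (fun x : 'cV[R]_l => x i ord0 *: As i).
  by rewrite fct_sumE.
elim/big_ind: _ => //.
- exact: cst_continuous.
- by move=> f g cf cg x; apply: continuousD; [apply: cf|apply: cg].
- move=> i _ x; apply: (@continuous_comp _ _ _ (fun x : 'cV[R]_l => x i ord0) ( *:%R^~ (As i))).
  + exact: coord_continuous.
  + exact: scalel_continuous.
Qed.

Lemma dAmap x : 'd (Amap A0 As) x = Lf :> ('cV[R]_l -> 'M[R]_n).
Proof.
pose lM := GRing.isLinear.Build _ _ _ _ _ Lf_linear.
pose L : {linear 'cV[R]_l -> 'M[R]_n} := HB.pack Lf lM.
have -> : Amap A0 As = cst A0 + (L : 'cV[R]_l -> 'M[R]_n).
  by apply/funext => y.
have dL : differentiable L x by apply: linear_differentiable; exact: Lf_cont.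
have eL : 'd L x = L :> ('cV[R]_l -> 'M[R]_n) by apply: diff_lin; exact: Lf_cont.
have dc : differentiable (cst A0 : 'cV[R]_l -> 'M[R]_n) x by exact: differentiable_cst.
have h := diffD dc dL.
apply: (etrans h).
have ec : ('d (cst A0 : 'cV[R]_l -> 'M[R]_n) x : 'cV[R]_l -> 'M[R]_n) = 0 by exact: diff_cst.
apply/funext => y /=.
have e1 := congr1 (fun f => f y) ec.
have e2 := congr1 (fun f => f y) eL.
simpl in e1, e2.
apply: (etrans (f_equal2 +%R e1 e2)).
by rewrite add0r.
Qed.

Lemma frobE (X Y : 'M[R]_n) : frob X Y = \sum_i \sum_j X i j * Y i j.
Proof.
rewrite /frob /mxtrace exchange_big /=; apply: eq_bigr => i _.
by rewrite mxE; apply: eq_bigr => j _; rewrite mxE.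
Qed.

Lemma frobC (X Y : 'M[R]_n) : frob X Y = frob Y X.
Proof.
rewrite !frobE; apply: eq_bigr => i _; apply: eq_bigr => j _.
by rewrite mulrC.
Qed.

Lemma frob_ge0 (X : 'M[R]_n) : 0 <= frob X X.
Proof. by rewrite frobE sumr_ge0 // => i _; rewrite sumr_ge0 // => j _; rewrite -expr2 sqr_ge0. Qed.

Lemma frob_eq0 (X : 'M[R]_n) : frob X X = 0 -> X = 0.
Proof.
rewrite frobE => /eqP; rewrite psumr_eq0; last first.
  by move=> i _; rewrite sumr_ge0 // => j _; rewrite -expr2 sqr_ge0.
move=> /allP H; apply/matrixP => i j; rewrite mxE.
have := H i (mem_index_enum _); rewrite ?implyTb. rewrite psumr_eq0; last first.
  by move=> k _; rewrite -expr2 sqr_ge0.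
move=> /allP /(_ j (mem_index_enum _)); rewrite ?implyTb -expr2 sqrf_eq0.
by move/eqP.
Qed.

Lemma frobDr (X Y Z : 'M[R]_n) : frob X (Y + Z) = frob X Y + frob X Z.
Proof.
rewrite !frobE -big_split /=; apply: eq_bigr => i _.
by rewrite -big_split /=; apply: eq_bigr => j _; rewrite mxE mulrDr.
Qed.

Lemma frobNr (X Y : 'M[R]_n) : frob X (- Y) = - frob X Y.
Proof.
rewrite !frobE -sumrN; apply: eq_bigr => i _.
by rewrite -sumrN; apply: eq_bigr => j _; rewrite mxE mulrN.
Qed.

Lemma frobZr (X Y : 'M[R]_n) a : frob X (a *: Y) = a * frob X Y.
Proof.
rewrite !frobE mulr_sumr; apply: eq_bigr => i _.
by rewrite mulr_sumr; apply: eq_bigr => j _; rewrite mxE mulrCA.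
Qed.

Lemma frob_sumr (X : 'M[R]_n) (F : 'I_l -> 'M[R]_n) :
  frob X (\sum_i F i) = \sum_i frob X (F i).
Proof.
elim/big_rec2: _; first by rewrite frobE big1 // => i _; rewrite big1 // => j _; rewrite mxE mulr0.
by move=> i y Y _ <-; rewrite frobDr.
Qed.

Lemma frob_As_Lf j c : frob (As j) (Lf c) = (Bmat As *m c) j ord0.
Proof.
rewrite /Lf frob_sumr mxE; apply: eq_bigr => i _.
by rewrite frobZr mxE mulrC.
Qed.

Lemma frob_Lf u v : frob (Lf u) (Lf v) = (u^T *m Bmat As *m v) ord0 ord0.
Proof.
rewrite [Lf u]/Lf frobC frob_sumr -mulmxA mxE.
apply: eq_bigr => i _; rewrite frobZr frobC frob_As_Lf mxE.
by rewrite mxE.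
Qed.


Lemma Lf_sub a b : Lf (a - b) = Lf a - Lf b.
Proof.
rewrite /Lf -sumrB; apply: eq_bigr => i _; by rewrite !mxE scalerBl.
Qed.

Lemma Amap_Lf x : Amap A0 As x = A0 + Lf x.
Proof. by []. Qed.

Lemma Bmat_tr : (Bmat As)^T = Bmat As.
Proof. by apply/matrixP => i j; rewrite !mxE frobC. Qed.

Hypothesis hind : forall (c0 : R) (c : 'I_l -> R),
  c0 *: A0 + \sum_(i < l) c i *: As i = 0 -> c0 = 0 /\ forall i, c i = 0.

Lemma Lf_inj c : Lf c = 0 -> c = 0.
Proof.
move=> h; have [|_ H] := hind 0 (fun i => c i ord0); first by rewrite scale0r add0r.
by apply/matrixP => i j; rewrite (ord1 j) H mxE.
Qed.

Lemma B_unit : Bmat As \in unitmx.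
Proof.
rewrite -row_free_unit; apply: inj_row_free => v hv.
have : Lf v^T = 0.
  apply: frob_eq0; rewrite frob_Lf trmxK hv mul0mx mxE //.
by move/Lf_inj => /(congr1 trmx); rewrite trmxK trmx0.
Qed.


Lemma frobDl (X Y Z : 'M[R]_n) : frob (Y + Z) X = frob Y X + frob Z X.
Proof. by rewrite frobC frobDr !(frobC X). Qed.

Lemma frob0r (X : 'M[R]_n) : frob X 0 = 0.
Proof. by rewrite -(scale0r (0 : 'M[R]_n)) frobZr mul0r. Qed.

Lemma Lf0 : Lf (0 : 'cV[R]_l) = 0 :> 'M[R]_n.
Proof. by rewrite -(subrr (0 : 'cV[R]_l)) Lf_sub subrr. Qed.

Lemma frob_diag (A Q : 'M[R]_n) (d : 'rV[R]_n) : A^T = A ->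
  frob A (Q *m diag_mx d *m Q^T) = \sum_k d 0 k * (Q^T *m A *m Q) k k.
Proof.
move=> hA; rewrite /frob hA mulmxA mxtrace_mulC !mulmxA mul_mx_diag /mxtrace.
by apply: eq_bigr => k _; rewrite mxE mulrC.
Qed.

End S.

Theorem mainTheorem3 (R : realType) (m p l : nat)
  (A0 : 'M[R]_(m + p)) (As : 'I_l -> 'M[R]_(m + p))
  (rho : 'S_(m + p)) (lstar : 'I_m -> R) :
  (* A_0,...,A_l symmetric *)
  A0^T = A0 -> (forall i, (As i)^T = As i) ->
  (* A_0,...,A_l linearly independent *)
  (forall (c0 : R) (c : 'I_l -> R),
     c0 *: A0 + \sum_(i < l) c i *: As i = 0 -> c0 = 0 /\ forall i, c i = 0) ->
  (* lambda*_1 <= ... <= lambda*_m *)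
  (forall i j : 'I_m, (i <= j)%N -> lstar i <= lstar j) ->
  (* (1) the induced metric *)
  (forall x u v : 'cV[R]_l,
     gA A0 As x u v = (u^T *m Bmat As *m v) ord0 ord0)
  /\
  (* (2) Riemannian gradient = B^{-1} (Euclidean gradient), wherever F is
     differentiable with Euclidean gradient G *)
  (forall (x G : 'cV[R]_l),
     differentiable (Fobj A0 As rho lstar) x ->
     (forall v, 'd (Fobj A0 As rho lstar) x v = (v^T *m G) ord0 ord0) ->
     forall w : 'cV[R]_l,
       (forall v, 'd (Fobj A0 As rho lstar) x v = gA A0 As x v w)
       <-> w = invmx (Bmat As) *m G)
  /\
  (* (3) Lift and Projection step = Riemannian gradient step *)
  (forall (xk : 'cV[R]_l) (Q1 : 'M[R]_(m + p, m)) (Q2 : 'M[R]_(m + p, p)),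
     let Q := row_mx Q1 Q2 in
     let L1 : 'rV[R]_m := \row_i eigval (Amap A0 As xk) (rho (lshift p i)) in
     let L2 : 'rV[R]_p := \row_j eigval (Amap A0 As xk) (rho (rshift m j)) in
     Q^T *m Q = 1%:M ->
     Amap A0 As xk = Q *m diag_mx (row_mx L1 L2) *m Q^T ->
     let Z := Q *m diag_mx (row_mx (\row_i lstar i) L2) *m Q^T in
     forall y : 'cV[R]_l,
       (forall z : 'cV[R]_l,
          frob_norm (Z - Amap A0 As y) <= frob_norm (Z - Amap A0 As z))
       <-> y = xk - invmx (Bmat As) *m gradF A0 As rho lstar Q1 xk).
Proof.
move=> hA0 hAs hind hl.
have part1 : forall x u v : 'cV[R]_l,
    gA A0 As x u v = (u^T *m Bmat As *m v) ord0 ord0.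
  move=> x u v; rewrite /gA.
  have e := dAmap (A0:=A0) (As:=As) x.
  have eu := congr1 (fun f => f u) e; have ev := congr1 (fun f => f v) e.
  simpl in eu, ev.
  apply: etrans (f_equal2 (@frob R (m + p)) eu ev) _.
  exact: frob_Lf.
have hB := B_unit hind.
split; first exact: part1.
split.
  move=> x G _ hd w; split.
  - move=> H.
    have eG : G = Bmat As *m w.
      apply/matrixP => i j; rewrite (ord1 j).
      have := etrans (esym (hd (delta_mx i 0))) (H (delta_mx i 0)).
      by rewrite part1 trmx_delta -mulmxA -!rowE !mxE.
    by rewrite eG mulKmx.
  - move=> -> v; apply: etrans (hd v) _.
    by rewrite part1 -mulmxA mulKVmx.
move=> xk Q1 Q2 Q L1 L2 hQ hAk Z y.
have hQl : forall a i, Q a (lshift p i) = Q1 a i by move=> a i; rewrite row_mxEl.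
clearbody Q.
set B := Bmat As. set g := gradF A0 As rho lstar Q1 xk.
set ys := xk - invmx B *m g.
have key : forall j, frob (As j) (Z - Amap A0 As ys) = 0.
  move=> j.
  have -> : Z - Amap A0 As ys = (Z - Amap A0 As xk) + Lf (As:=As) (invmx B *m g).
    by rewrite !Amap_Lf /ys Lf_sub !opprD opprK !addrA.
  rewrite frobDr frob_As_Lf mulKVmx // hAk /Z frobDr frobNr.
  rewrite !frob_diag // -sumrB big_split_ord /=.
  rewrite [X in _ + X + _]big1 ?addr0; last by move=> i _; rewrite !row_mxEr subrr.
  rewrite /g /gradF [X in _ + X]mxE -big_split /=; apply: big1 => i _.
  have hJ : (Q^T *m As j *m Q) (lshift p i) (lshift p i) = Jr As Q1 i j.
    rewrite [RHS]mxE !mxE; apply: eq_bigr => b _; rewrite !mxE hQl; congr (_ * _).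
    by apply: eq_bigr => a _; rewrite !mxE hQl.
  have -> : (Jr As Q1)^T j i = Jr As Q1 i j by rewrite mxE.
  rewrite !row_mxEl hJ; set J := Jr As Q1 i j.
  rewrite !mxE.
  by rewrite -mulrBl mulrC -mulrDr addrC subrKA subrr mulr0.
have hx : forall c, frob (Z - Amap A0 As ys) (Lf (As:=As) c) = 0.
  move=> c; rewrite /Lf frob_sumr big1 // => i _.
  by rewrite frobZr frobC key mulr0.
have hsplit : forall z, frob (Z - Amap A0 As z) (Z - Amap A0 As z) =
   frob (Z - Amap A0 As ys) (Z - Amap A0 As ys) + frob (Lf (As:=As) (ys - z)) (Lf (As:=As) (ys - z)).
  move=> z.
  have -> : Z - Amap A0 As z = (Z - Amap A0 As ys) + Lf (As:=As) (ys - z).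
    by rewrite (Lf_sub ys z) !Amap_Lf !opprD !addrA subrK.
  rewrite frobDl (frobDr (Z - Amap A0 As ys)) (frobDr (Lf (As:=As) (ys - z))). rewrite hx (frobC (Lf (As:=As) (ys - z))) hx add0r addr0. done.
have hD := frob_ge0 (Z - Amap A0 As ys).
split.
- move=> H; have := H ys; rewrite /frob_norm (hsplit y) (hsplit ys) subrr Lf0 frob0r addr0.
  rewrite ler_sqrt // gerDl => hle.
  have h0 : frob (Lf (As:=As) (ys - y)) (Lf (As:=As) (ys - y)) = 0.
    by apply/le_anti; rewrite hle frob_ge0.
  by have /eqP := Lf_inj hind _ (frob_eq0 _ h0); rewrite subr_eq0 => /eqP.
- move=> -> z; rewrite /frob_norm (hsplit z).
  by rewrite ler_sqrt ?lerDl ?frob_ge0 // addr_ge0 // frob_ge0.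
Qed.
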